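(* Let $p$ be a prime, $q=p^e$, $m,k\ge1$, and let $d$ be an integer with $0<d\le k(q^m-1)$. Then there exists a homogeneous polynomial $f\in\mathbb{F}_{q^m}[x_1,\dots,x_k]$ of degree $d$ such that $\nu_p\big(N(f=y^q-y)\big)\le em\lceil k/d\rceil$.
   Context: $N(f=y^q-y)$ denotes the number of $(x_1,\dots,x_k,y)\in\mathbb{F}_{q^m}^{k+1}$ with $f(x_1,\dots,x_k)=y^q-y$; $\nu_p$ is the $p$-adic valuation. *)

(* Defs.v *)
From mathcomp Require Import all_boot all_order all_algebra all_field.
From mathcomp Require Import mpoly.
Set Implicit Arguments. Unset Strict Implicit. Unset Printing Implicit Defensive.
Import GRing.Theory.
Local Open Scope ring_scope.

Definition Nfy (F : finFieldType) (k q : nat) (f : {mpoly F[k]}) : nat :=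
  #|[set xy : {ffun 'I_k -> F} * F |
       f.@[fun i => xy.1 i] == xy.2 ^+ q - xy.2]|.

Definition ceildiv (a b : nat) : nat := ((a + b - 1) %/ b)%N.

(* Main.v *)
Require Import Defs.
From mathcomp Require Import all_boot all_order all_algebra all_field.
From mathcomp Require Import mpoly.
From mathcomp Require Import ring zify.
Set Implicit Arguments. Unset Strict Implicit. Unset Printing Implicit Defensive.
Import GRing.Theory.

Lemma final_arith p E n0 N C s k r D : prime p -> p %| n0 -> 0 < n0 ->
  N + C = (p ^ E) ^ k + n0 * C -> C * (p ^ E) ^ s = (p ^ E) ^ k * D ->
  ~~ (p %| D) -> 0 < s -> 0 < E -> k <= s + r -> logn p N <= E * r.
Proof.
move=> pp pn0 n00 HN HC pD s0 E0 ksr.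
set Q := p ^ E.
have Q0 : 0 < Q by rewrite expn_gt0 prime_gt0.
have eN : N = Q ^ k + (n0 - 1) * C.
  by apply/eqP; rewrite -(eqn_add2r C) HN mulnBl mul1n -addnA subnK // leq_pmull.
have eNQ : N * Q ^ s = Q ^ k * (Q ^ s + (n0 - 1) * D).
  by rewrite eN mulnDl -mulnA HC mulnDr mulnCA.
have N0 : 0 < N by rewrite eN ltn_addr // expn_gt0 Q0.
have pB : ~~ (p %| Q ^ s + (n0 - 1) * D).
  have pQ : p %| Q ^ s by rewrite /Q -expnM; apply: dvdn_exp => //; rewrite muln_gt0 E0 s0.
  rewrite (dvdn_addr _ pQ) Euclid_dvdM // negb_or pD andbT.
  apply/negP => H; have := dvdn_sub pn0 H.
  by rewrite subKn // dvdn1 => /eqP p1; rewrite p1 in pp.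
have QQ : forall j, 0 < Q ^ j by move=> j; rewrite expn_gt0 Q0.
have B0 : 0 < Q ^ s + (n0 - 1) * D by rewrite ltn_addr.
have := congr1 (logn p) eNQ.
rewrite (lognM _ N0 (QQ s)) (lognM _ (QQ k) B0).
rewrite (@logn_coprime p (Q ^ s + (n0 - 1) * D)); last by rewrite prime_coprime.
have lp : logn p p = 1 by rewrite -{2}(expn1 p) pfactorK.
rewrite !lognX lp muln1 addn0 => H.
have : E * k <= E * s + E * r by rewrite -mulnDr leq_mul2l ksr orbT.
lia.
Qed.

Local Open Scope ring_scope.


Section Count.
Context (F : finFieldType) (k : nat).
Local Notation X := {ffun 'I_k -> F}.

Definition setv (x : X) (i : 'I_k) (c : F) : X :=
  [ffun j => if j == i then c else x j].

Lemma setv_at x i c : setv x i c i = c.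
Proof. by rewrite ffunE eqxx. Qed.
Lemma setv_ne x i c j : j != i -> setv x i c j = x j.
Proof. by rewrite ffunE => /negPf ->. Qed.
Lemma setv_id x i : setv x i (x i) = x.
Proof. by apply/ffunP => j; rewrite ffunE; case: eqP => // ->. Qed.
Lemma setvK x i c c' : setv (setv x i c) i c' = setv x i c'.
Proof. by apply/ffunP => j; rewrite !ffunE; case: eqP. Qed.

Lemma card_indep (P : pred X) i c :
  (forall x c', P (setv x i c') = P x) ->
  (#|[set x | P x & x i == c]| * #|F| = #|[set x | P x]|)%N.
Proof.
move=> HP.
pose D := setX [set x | P x & x i == c] [set: F].
pose g := fun xc : X * F => setv xc.1 i xc.2.
have inj : {in D &, injective g}.
  move=> [x a] [y b]; rewrite !inE /= => /andP[/andP[_ /eqP hx] _] /andP[/andP[_ /eqP hy] _] E.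
  have ea : a = b by move: (congr1 (fun z : X => z i) E); rewrite /g /= !setv_at.
  have : setv (g (x, a)) i c = setv (g (y, b)) i c by rewrite E.
  by rewrite /g /= !setvK -{1}hx -hy !setv_id ea => ->.
have -> : [set x | P x] = g @: D.
  apply/setP => z; rewrite inE; apply/idP/imsetP.
    move=> Pz; exists (setv z i c, z i); last by rewrite /g /= setvK setv_id.
    by rewrite !inE HP Pz setv_at eqxx.
  by move=> [[x a] + ->]; rewrite !inE /= => /andP[/andP[Px _] _]; rewrite /g /= HP.
by rewrite (card_in_imset inj) cardsX cardsT.
Qed.

Definition inv (P : pred X) i := forall x c, P (setv x i c) = P x.

Lemma card_split (P Q : pred X) :
  (#|[set x | P x & Q x]| + #|[set x | P x & ~~ Q x]| = #|[set x | P x]|)%N.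
Proof.
rewrite -(cardsID [set x | Q x] [set x | P x]); congr (_ + _)%N; apply: eq_card => x;
by rewrite !inE andbC.
Qed.

Lemma card_nz (P : pred X) i : inv P i ->
  (#|[set x | P x & x i != 0%R]| * #|F| = #|[set x | P x]| * (#|F| - 1))%N.
Proof.
move=> HP; have h1 := card_indep 0%R HP.
have h2 := card_split P (fun x => x i == 0%R).
have eA : #|[set x | P x & x i != 0%R]| = (#|[set x | P x & x i == 0%R]| * (#|F| - 1))%N.
  by rewrite mulnBr muln1 h1 -h2 addKn.
by rewrite -h1 eA mulnAC.
Qed.

Lemma card_all_nz (L : seq 'I_k) (P : pred X) : uniq L -> (forall i, i \in L -> inv P i) ->
  (#|[set x | P x & all (fun i => x i != 0%R) L]| * #|F| ^ size L
   = #|[set x | P x]| * (#|F| - 1) ^ size L)%N.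
Proof.
elim: L P => [|i L IH] P /= uL HP.
  by rewrite !muln1; apply: eq_card => x; rewrite !inE andbT.
case/andP: uL => iL uL.
pose P' := fun x : X => P x && (x i != 0).
have HP' : forall j, j \in L -> inv P' j.
  move=> j jL x c; rewrite /P' HP ?inE ?jL ?orbT //.
  have : j != i by apply: contraNneq iL => <-.
  by rewrite eq_sym => /setv_ne ->.
have := IH P' uL HP'.
have -> : #|[set x | P' x & all (fun i0 => x i0 != 0%R) L]| =
          #|[set x | P x & (x i != 0%R) && all (fun i => x i != 0%R) L]|.
  by apply: eq_card => x; rewrite !inE /P' andbA.
move=> E.
rewrite expnS mulnCA E mulnA [(#|F| * _)%N]mulnC.
have -> : #|[set x | P' x]| = #|[set x | P x & x i != 0%R]| by apply: eq_card => x; rewrite !inE.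
rewrite card_nz; last by apply: HP; rewrite inE eqxx.
by rewrite -mulnA -expnS.
Qed.

Lemma card_has (L : seq 'I_k) (P : pred X) : uniq L -> (forall i, i \in L -> inv P i) ->
  (#|[set x | P x & has (fun i => x i == 0%R) L]| * #|F| ^ size L
   = #|[set x | P x]| * (#|F| ^ size L - (#|F| - 1) ^ size L))%N.
Proof.
move=> uL HP; have := card_all_nz uL HP.
have := card_split P (fun x => has (fun i => x i == 0%R) L).
have -> : #|[set x | P x & ~~ has (fun i => x i == 0%R) L]| =
          #|[set x | P x & all (fun i => x i != 0%R) L]|.
  by apply: eq_card => x; rewrite !inE -all_predC.
move=> <- E; rewrite mulnBr -E mulnDl addnK //.
Qed.

Lemma card_blocks (Ls : seq (seq 'I_k)) (P : pred X) : uniq (flatten Ls) ->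
  (forall i, i \in flatten Ls -> inv P i) ->
  (#|[set x | P x & all (fun L => has (fun i => x i == 0%R) L) Ls]| * #|F| ^ sumn (map size Ls)
   = #|[set x | P x]| * \prod_(L <- Ls) (#|F| ^ size L - (#|F| - 1) ^ size L))%N.
Proof.
elim: Ls P => [|L Ls IH] P /= uL HP.
  by rewrite big_nil !muln1; apply: eq_card => x; rewrite !inE andbT.
rewrite cat_uniq in uL; case/and3P: uL => uL dis uLs.
pose P' := fun x : X => P x && has (fun i => x i == 0%R) L.
have HP' : forall j, j \in flatten Ls -> inv P' j.
  move=> j jL x c; rewrite /P' HP ?mem_cat ?jL ?orbT //; congr (_ && _).
  apply: eq_in_has => i iL; rewrite setv_ne //.
  by apply: contraNneq dis => ji; apply/hasP; exists j => //; rewrite -ji.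
have := IH P' uLs HP'.
have -> : #|[set x | P' x & all (fun L => has (fun i => x i == 0%R) L) Ls]| =
          #|[set x | P x & has (fun i => x i == 0%R) L && all (fun L => has (fun i => x i == 0%R) L) Ls]|.
  by apply: eq_card => x; rewrite !inE /P' andbA.
move=> E.
rewrite expnD mulnCA E big_cons mulnA [(_ ^ size L * _)%N]mulnC.
have -> : #|[set x | P' x]| = #|[set x | P x & has (fun i => x i == 0%R) L]| by apply: eq_card => x; rewrite !inE.
rewrite card_has //; first by rewrite -mulnA.
by move=> i iL; apply: HP; rewrite mem_cat iL.
Qed.

Lemma sum_card_fibers (T U : finType) (g : T -> U) :
  (\sum_(u : U) #|[set t | g t == u]| = #|T|)%N.
Proof.
rewrite -sum1_card (partition_big g predT) //=.
by apply: eq_bigr => u _; rewrite -sum1_card; apply: eq_bigl => t; rewrite inE.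
Qed.

Section Lin.
Context (phi : X -> F) (psi : F -> F).
Definition nfib (t : F) := #|[set y | psi y == t]|.

Lemma card_fiber_lin (S : pred X) (a : 'I_k) (Ra : X -> F) t :
  inv S a -> (forall x c, Ra (setv x a c) = Ra x) ->
  (forall x c, phi (setv x a c) = phi x + (c - x a) * Ra x) ->
  (forall x, S x -> Ra x != 0) ->
  #|[set x | S x & phi x == t]| = #|[set x | S x & x a == 0]|.
Proof.
move=> HS HR Hphi Hnz.
pose g := fun x => setv x a ((t - phi x) / Ra x).
have inj : {in [set x | S x & x a == 0] &, injective g}.
  move=> x y; rewrite !inE => /andP[_ /eqP xa] /andP[_ /eqP ya] E.
  by rewrite -(setv_id x a) -(setv_id y a) xa ya -(setvK x a ((t - phi x) / Ra x)) -(setvK y a ((t - phi y) / Ra y)) -/(g x) -/(g y) E.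
rewrite -(card_in_imset inj); apply: eq_card => z; rewrite inE; apply/idP/imsetP.
  case/andP=> Sz /eqP pz; exists (setv z a 0).
    by rewrite inE HS Sz setv_at eqxx.
  rewrite /g Hphi HR setvK pz; rewrite -{1}(setv_id z a); congr (setv _ _ _).
  have -> : t - (t + (0 - z a) * Ra z) = z a * Ra z by rewrite opprD addrA subrr add0r sub0r mulNr opprK.
  by rewrite mulfK //; exact: Hnz.
case=> x; rewrite inE => /andP[Sx /eqP xa] ->.
rewrite /g HS Sx /= Hphi xa subr0 divfK; first by rewrite addrC subrK.
exact: Hnz.
Qed.

Lemma sum_fiber_class (S : pred X) (a : 'I_k) (Ra : X -> F) :
  inv S a -> (forall x c, Ra (setv x a c) = Ra x) ->
  (forall x c, phi (setv x a c) = phi x + (c - x a) * Ra x) ->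
  (forall x, S x -> Ra x != 0) ->
  (\sum_(x | S x) nfib (phi x) = #|[set x | S x]|)%N.
Proof.
move=> HS HR Hphi Hnz.
have -> : (\sum_(x | S x) nfib (phi x) = \sum_(y : F) #|[set x | S x & phi x == psi y]|)%N.
  rewrite /nfib; under eq_bigr do rewrite -sum1_card.
  rewrite (exchange_big_dep predT) //=; apply: eq_bigr => y _.
  rewrite -sum1_card; apply: eq_bigl => x; rewrite !inE eq_sym //.
under eq_bigr do rewrite (card_fiber_lin _ HS HR Hphi Hnz).
by rewrite sum_nat_const cardT -cardE mulnC card_indep.
Qed.

Section Main.
Context (A : {set 'I_k}) (R : 'I_k -> X -> F).
Hypothesis hR : forall a a', a \in A -> a' \in A -> forall x c, R a (setv x a' c) = R a x.
Hypothesis hphi : forall a, a \in A -> forall x c, phi (setv x a c) = phi x + (c - x a) * R a x.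
Hypothesis h0 : forall x, [forall a in A, R a x == 0%R] -> phi x = 0.

Definition cls (x : X) := [pick a | (a \in A) && (R a x != 0)].

Lemma cls_az x : (cls x == None) = [forall a in A, R a x == 0%R].
Proof.
rewrite /cls; case: pickP => [a /andP[aA Ra]|H] /=.
  by symmetry; apply/negbTE/forallP => /(_ a); rewrite aA /= (negbTE Ra).
by symmetry; apply/forall_inP => a aA; move: (H a); rewrite aA /= => /negbFE.
Qed.

Lemma sum_cls (G : X -> nat) :
  (\sum_(x | ~~ [forall a in A, R a x == 0%R]) G x = \sum_a \sum_(x | cls x == Some a) G x)%N.
Proof.
rewrite (exchange_big_dep (fun x => ~~ [forall a in A, R a x == 0%R])) /=; last first.
  by move=> a x _ /eqP E; rewrite -cls_az E.
apply: eq_bigr => x; rewrite -cls_az; case E: (cls x) => [a|] // _.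
by rewrite (big_pred1 a) // => b /=; rewrite eq_sym.
Qed.

Lemma N_formula :
  (\sum_x nfib (phi x) + #|[set x | [forall a in A, R a x == 0%R]]|
   = #|F| ^ k + nfib 0%R * #|[set x | [forall a in A, R a x == 0%R]]|)%N.
Proof.
rewrite (bigID (fun x => [forall a in A, R a x == 0%R])) /=.
have -> : (\sum_(x | [forall a in A, R a x == 0%R]) nfib (phi x)
          = nfib 0%R * #|[set x | [forall a in A, R a x == 0%R]]|)%N.
  rewrite (eq_bigr (fun _ => nfib 0%R)); last by move=> x /h0 ->.
  by rewrite sum_nat_const mulnC; congr (_ * _)%N; apply: eq_card => x; rewrite inE.
have -> : (\sum_(x | ~~ [forall a in A, R a x == 0%R]) nfib (phi x)
          = \sum_(x | ~~ [forall a in A, R a x == 0%R]) 1)%N.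
  rewrite !sum_cls; apply: eq_bigr => a _.
  case aA: (a \in A); last first.
    have E0 : forall x, (cls x == Some a) = false.
      move=> x; rewrite /cls; case: pickP => // b /andP[bA _].
      by apply/negbTE; apply: contraFneq aA => -[ ba]; rewrite -ba.
    by rewrite !big_pred0.
  rewrite (@sum_fiber_class (fun x => cls x == Some a) a (R a)).
  - by rewrite sum1_card; apply: eq_card => x; rewrite inE.
  - move=> x c; rewrite /cls; congr (_ == _); apply: eq_pick => b /=.
    by case bA: (b \in A) => //=; rewrite hR.
  - by move=> x c; rewrite hR.
  - exact: hphi.
  - by move=> x; rewrite /cls; case: pickP => // b /andP[_ Rb] /eqP[<-].
rewrite sum1_card [in RHS]addnC -addnA; congr (_ + _)%N.
have -> : (#|F| ^ k)%N = #|{ffun 'I_k -> F}| by rewrite card_ffun card_ord.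
rewrite addnC -(cardC [pred x | [forall a in A, R a x == 0%R]]).
congr (_ + _)%N; apply: eq_card => x; rewrite !inE //.
Qed.
End Main.
End Lin.
End Count.


Section Frob.
Context (F : finFieldType) (p e m : nat).
Hypothesis pp : prime p.
Hypothesis cardF : #|F| = ((p ^ e) ^ m)%N.
Hypothesis e0 : (0 < e)%N.
Hypothesis m0 : (0 < m)%N.

Let q := (p ^ e)%N.
Definition psi (y : F) := y ^+ q - y.

Lemma charF : p \in [pchar F].
Proof. by apply: (@card_finPcharP _ _ (e * m)) => //; rewrite cardF expnM. Qed.

Lemma frobD (x y : F) : (x + y) ^+ q = x ^+ q + y ^+ q.
Proof.
apply: exprDn_pchar; rewrite /q pnatX (pnatE _ pp) charF //.
Qed.

Lemma psiB x y : psi (x - y) = psi x - psi y.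
Proof.
have : x ^+ q = (x - y) ^+ q + y ^+ q by rewrite -frobD subrK.
move=> E; rewrite /psi E; ring.
Qed.


Lemma fib_eq t y0 : psi y0 = t -> #|[set y | psi y == t]| = #|[set y | psi y == 0%R]|.
Proof.
move=> Ht.
have -> : [set y | psi y == t] = (fun y => y + y0) @: [set y | psi y == 0%R].
  apply/setP => z; rewrite inE; apply/idP/imsetP.
    move/eqP=> Hz; exists (z - y0); last by rewrite subrK.
    by rewrite inE psiB Hz Ht subrr.
  case=> y; rewrite inE => /eqP Hy ->.
  by move: (psiB (y + y0) y0); rewrite addrK Hy Ht => /eqP; rewrite eq_sym subr_eq0.
by rewrite card_imset //; apply: addIr.
Qed.

Lemma n0_gt1 : (1 < #|[set y : F | psi y == 0%R]|)%N.
Proof.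
have : [set 0; 1] \subset [set y : F | psi y == 0%R].
  have q0 : (0 < q)%N by rewrite expn_gt0 prime_gt0.
  apply/subsetP => y; rewrite !inE => /orP[]/eqP->; rewrite /psi ?expr1n ?subrr // expr0n eqn0Ngt q0 /= subrr //.
move/subset_leq_card; rewrite cards2 eq_sym oner_neq0 //.
Qed.

Lemma sumfib : (\sum_(t : F) #|[set y | psi y == t]| = #|F|)%N.
Proof.
symmetry; transitivity (\sum_(y : F) 1)%N; first by rewrite sum1_card.
rewrite (partition_big psi predT) //=.
by apply: eq_bigr => u _; rewrite sum1_card; apply: eq_card => t; rewrite inE.
Qed.

Lemma n0_dvd : (p %| #|[set y : F | psi y == 0%R]|)%N.
Proof.
have H : (#|[set y : F | psi y == 0%R]| %| #|F|)%N.
  rewrite -sumfib; apply: dvdn_sum => t _.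
  case: (pickP (fun y => psi y == t)) => [y0 /eqP Hy|H0].
    by rewrite (fib_eq Hy).
  suff -> : #|[set y | psi y == t]| = 0%N by [].
  by apply/eqP; rewrite cards_eq0; apply/eqP/setP => y; rewrite !inE H0.
move: H; rewrite cardF -expnM => /(dvdn_pfactor _ _ pp) [j _ Ej].
have := n0_gt1; rewrite Ej; case: j {Ej} => [|j] //.
by rewrite expnS dvdn_mulr.
Qed.
End Frob.


Section Blocks.
Context (F : finFieldType) (k' d' : nat).
Local Notation k := k'.+2.
Local Notation d := d'.+2.

Definition Ablk : {set 'I_k} := [set a : 'I_k | (a %% d == 0)%N && (a.+1 < k)%N].
Definition Sblk (a : 'I_k) : {set 'I_k} :=
  [set l : 'I_k | (l %/ d == a %/ d)%N && (l %% d != 0)%N].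
Definition cblk (a : 'I_k) : 'I_k := inord a.+1.

Lemma cblk_in a : a \in Ablk -> cblk a \in Sblk a.
Proof.
rewrite !inE => /andP[/eqP am ak]; rewrite /cblk inordK //.
rewrite {1 3}(divn_eq a d) am addn0 -addn1 divnMDl // modnMDl.
by rewrite (divn_small (isT : (1 < d)%N)) addn0 eqxx modn_small.
Qed.

Lemma A_notin_S a b : b \in Ablk -> b \notin Sblk a.
Proof. by rewrite !inE => /andP[/eqP -> _]; rewrite andbF. Qed.

Lemma S_disj a b l : a \in Ablk -> b \in Ablk -> l \in Sblk a -> l \in Sblk b -> a = b.
Proof.
rewrite !inE => /andP[/eqP am _] /andP[/eqP bm _] /andP[/eqP la _] /andP[/eqP lb _].
apply: val_inj => /=; rewrite (divn_eq a d) (divn_eq b d) am bm -la -lb //.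
Qed.

Lemma card_S a : (#|Sblk a| <= d.-1)%N.
Proof.
have d0 : (0 < d)%N by [].
pose h := fun l : 'I_k => Ordinal (ltn_pmod l d0).
have inj : {in Sblk a &, injective h}.
  move=> l l'; rewrite !inE => /andP[/eqP la _] /andP[/eqP la' _] /(congr1 val) /= E.
  by apply: val_inj; rewrite /= (divn_eq l d) (divn_eq l' d) la la' E.
rewrite -(card_in_imset inj).
have : h @: Sblk a \subset [set~ (ord0 : 'I_d)].
  apply/subsetP => i /imsetP [l]; rewrite !inE => /andP[_ lm] ->.
  by apply: contra lm => /eqP /(congr1 val) /= ->.
by move/subset_leq_card; rewrite cardsC1 card_ord.
Qed.

Definition Rpoly (a : 'I_k) : {mpoly F[k]} :=
  (\prod_(l <- enum (Sblk a)) 'X_l) * 'X_(cblk a) ^+ (d.-1 - #|Sblk a|).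
Definition fblk : {mpoly F[k]} := \sum_(a in Ablk) 'X_a * Rpoly a.

Lemma homX (i : 'I_k) : ('X_i : {mpoly F[k]}) \is 1.-homog.
Proof. by rewrite dhomogX /= mdeg1. Qed.

Lemma homprod (s : seq 'I_k) : \prod_(l <- s) ('X_l : {mpoly F[k]}) \is (size s).-homog.
Proof.
elim: s => [|l s IH]; first by rewrite big_nil dhomog1.
by rewrite big_cons; apply: (dhomogM (homX l) IH).
Qed.

Lemma fblk_homog : fblk \is d.-homog.
Proof.
rewrite /fblk; apply: rpred_sum => a _.
have -> : d = (1 + (size (enum (Sblk a)) + 1 * (d.-1 - #|Sblk a|)))%N.
  by rewrite -cardE mul1n subnKC ?card_S.
apply: dhomogM; first exact: homX.
apply: dhomogM; first exact: homprod.
exact: dhomogMn (homX _).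
Qed.


Lemma evalR a (x : 'I_k -> F) : (Rpoly a).@[x] =
  (\prod_(l <- enum (Sblk a)) x l) * x (cblk a) ^+ (d.-1 - #|Sblk a|).
Proof.
rewrite /Rpoly rmorphM rmorph_prod rmorphXn /= mevalXU.
by congr (_ * _); apply: eq_bigr => l _; rewrite mevalXU.
Qed.

Lemma evalf (x : 'I_k -> F) : fblk.@[x] = \sum_(a in Ablk) x a * (Rpoly a).@[x].
Proof. by rewrite /fblk (big_morph _ (mevalD x) (meval0 x)); apply: eq_bigr => a _; rewrite mevalM mevalXU. Qed.

Local Notation X := {ffun 'I_k -> F}.
Definition Rv (a : 'I_k) (x : X) : F := (Rpoly a).@[fun i => x i].
Definition phiv (x : X) : F := fblk.@[fun i => x i].

Lemma hRv a a' : a \in Ablk -> a' \in Ablk -> forall x c, Rv a (setv x a' c) = Rv a x.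
Proof.
move=> aA a'A x c; rewrite /Rv !evalR; congr (_ * _).
  apply: eq_big_seq => l; rewrite mem_enum => lS; rewrite setv_ne //.
  by apply: contraNneq (A_notin_S a a'A) => <-.
rewrite setv_ne //; apply: contraNneq (A_notin_S a a'A) => <-; exact: cblk_in.
Qed.

Lemma hphiv a : a \in Ablk -> forall x c, phiv (setv x a c) = phiv x + (c - x a) * Rv a x.
Proof.
move=> aA x c; rewrite /phiv !evalf (bigD1 a) //= [in RHS](bigD1 a) //=.
rewrite setv_at -/(Rv a _) -/(Rv a x) hRv //.
have -> : \sum_(i in Ablk | i != a) setv x a c i * (Rpoly i).@[fun i0 => setv x a c i0]
        = \sum_(i in Ablk | i != a) x i * (Rpoly i).@[fun i0 => x i0].
  apply: eq_bigr => b /andP[bA ba]; rewrite setv_ne //.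
  by rewrite -/(Rv b _) -/(Rv b x) hRv.
by ring.
Qed.

Lemma h0v x : [forall a in Ablk, Rv a x == 0] -> phiv x = 0.
Proof.
move/forall_inP=> H; rewrite /phiv evalf big1 // => a aA.
by rewrite -/(Rv a x) (eqP (H a aA)) mulr0.
Qed.

Lemma Rv_eq0 a x : a \in Ablk -> (Rv a x == 0) = has (fun l => x l == 0) (enum (Sblk a)).
Proof.
move=> aA; rewrite /Rv evalR mulf_eq0 prodf_seq_eq0 expf_eq0.
apply/orP/idP => [[//|/andP[_ xc]]|->//]; last by left.
by apply/hasP; exists (cblk a) => //; rewrite mem_enum cblk_in.
Qed.

Lemma uniq_flat (s : seq 'I_k) : uniq s -> all (mem Ablk) s ->
  uniq (flatten [seq enum (Sblk a) | a <- s]).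
Proof.
elim: s => [//|a s IH] /= /andP[nas us] /andP[aA sA].
rewrite cat_uniq enum_uniq IH // andbT.
apply/hasPn => l /flatten_mapP [b bs lb]; rewrite mem_enum; apply/negP => la.
rewrite mem_enum in lb.
have ab := S_disj aA (allP sA b bs) la lb.
by move: nas; rewrite ab bs.
Qed.

End Blocks.


Lemma Nfy_sum (F : finFieldType) k q (f : {mpoly F[k]}) :
  @Nfy F k q f = (\sum_(x : {ffun 'I_k -> F}) nfib (fun y : F => (y ^+ q - y)%R) (f.@[fun i => x i])%R)%N.
Proof.
rewrite /Nfy.
transitivity (\sum_(xy : {ffun 'I_k -> F} * F) ((f.@[fun i => xy.1 i] == xy.2 ^+ q - xy.2)%R : nat))%N.
  rewrite -sum1_card big_mkcond; apply: eq_bigr => xy _; rewrite inE; by case: eqP.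
rewrite -(pair_bigA _ (fun (x : {ffun 'I_k -> F}) (y : F) => ((f.@[fun i => x i] == y ^+ q - y)%R : nat))) /=; apply: eq_bigr => x _; rewrite /nfib -sum1_card big_mkcond.
rewrite [in RHS]big_mkcond /=; apply: eq_bigr => y _; rewrite inE eq_sym; by case: eqP.
Qed.

Lemma ceil_bound k d : (0 < d)%N -> (k <= ceildiv k d * d)%N.
Proof.
move=> d0; rewrite /ceildiv.
have := divn_eq (k + d - 1) d; have := ltn_pmod (k + d - 1) d0.
lia.
Qed.

Lemma ceil_lt k d : (1 < k)%N -> (1 < d)%N -> (ceildiv k d < k)%N.
Proof.
move=> k1 d1; rewrite /ceildiv ltn_divLR; last by lia.
nia.
Qed.

Lemma card_nzmod k' d' :
  (#|[set l : 'I_k'.+2 | l %% d'.+2 != 0]| <=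
   sumn (map size [seq enum (Sblk d' a) | a <- enum (Ablk k' d')]))%N.
Proof.
rewrite -[map size _]/(shape _) -size_flatten cardE.
apply: uniq_leq_size (enum_uniq _) _ => l; rewrite mem_enum inE => lm.
have ld : (l - l %% d'.+2 = l %/ d'.+2 * d'.+2)%N by rewrite {1}(divn_eq l d'.+2) addnK.
have lk : (l - l %% d'.+2 < k'.+2)%N by apply: leq_ltn_trans (leq_subr _ _) (ltn_ord l).
apply/flatten_mapP; exists (inord (l - l %% d'.+2)).
  rewrite mem_enum inE inordK // ld modnMl eqxx /= -ld.
  apply: leq_ltn_trans (ltn_ord l); rewrite -ltnS -[(_ - _).+1]addn1 -ltn_subRL.
  have := leq_mod l d'.+2; move: lm; rewrite -lt0n; lia.
rewrite mem_enum inE inordK // ld mulnK // eqxx lm //.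
Qed.

Lemma card_zmod k d : (0 < d)%N ->
  (#|[set l : 'I_k.+1 | l %% d == 0]| <= ceildiv k.+1 d)%N.
Proof.
move=> d0.
have sub : [set l : 'I_k.+1 | (l %% d == 0)%N] \subset
           [set (inord (j * d) : 'I_k.+1) | j : 'I_(ceildiv k.+1 d)].
  apply/subsetP => l; rewrite inE => /eqP lm.
  have lt : (l %/ d < ceildiv k.+1 d)%N.
    rewrite ltn_divLR //; apply: leq_trans (ceil_bound _ d0); exact: ltn_ord.
  apply/imsetP; exists (Ordinal lt) => //=.
  have e : (l %/ d * d = l)%N by rewrite [in RHS](divn_eq l d) lm addn0.
  by apply: val_inj; rewrite /= inordK e.
apply: leq_trans (subset_leq_card sub) _.
by apply: leq_trans (leq_imset_card _ _) _; rewrite card_ord.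
Qed.


Lemma block_case (F : finFieldType) p e m k' d' : prime p -> (0 < e)%N -> (0 < m)%N ->
  #|F| = ((p ^ e) ^ m)%N ->
  (logn p (@Nfy F k'.+2 (p ^ e) (fblk F k' d')) <= e * m * ceildiv k'.+2 d'.+2)%N.
Proof.
move=> pp e0 m0 cF.
rewrite Nfy_sum.
have NF := N_formula (psi p e) (@hRv F k' d') (@hphiv F k' d') (@h0v F k' d').
pose Ls := [seq enum (Sblk d' a) | a <- enum (Ablk k' d')].
have uL : uniq (flatten Ls).
  by apply: uniq_flat; [exact: enum_uniq | apply/allP => a; rewrite mem_enum].
have CB := @card_blocks F k'.+2 Ls predT uL (fun _ _ _ _ => erefl).
have eC : #|[set x : {ffun 'I_k'.+2 -> F} | [forall a in Ablk k' d', Rv d' a x == 0]]|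
        = #|[set x : {ffun 'I_k'.+2 -> F} | predT x & all (fun L => has (fun i => x i == 0) L) Ls]|.
  apply: eq_card => x; rewrite !inE /= all_map.
  apply/forall_inP/allP => [H a|H a aA].
    by rewrite mem_enum => aA /=; rewrite -Rv_eq0 // H.
  by rewrite Rv_eq0 //; apply: (H a); rewrite mem_enum.
have eT : #|[set x : {ffun 'I_k'.+2 -> F} | predT x]| = (#|F| ^ k'.+2)%N.
  by rewrite cardsT card_ffun card_ord.
rewrite -eC eT in CB.
have pD : ~~ (p %| \prod_(L <- Ls) (#|F| ^ size L - (#|F| - 1) ^ size L))%N.
  rewrite Euclid_dvd_prod // big_has; apply/hasPn => L /mapP [a aA ->].
  rewrite mem_enum in aA.
  have sz : (0 < size (enum (Sblk d' a)))%N.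
    by rewrite -cardE; apply/card_gt0P; exists (cblk a); apply: cblk_in.
  set t := size _ in sz *.
  have F0 : (0 < #|F|)%N by apply/card_gt0P; exists 0.
  have pF : (p %| #|F| ^ t)%N.
    by rewrite cF -!expnM; apply: dvdn_exp (dvdnn p); rewrite !muln_gt0 e0 m0 sz.
  apply/negP => H.
  have le : ((#|F| - 1) ^ t <= #|F| ^ t)%N by rewrite leq_exp2r ?leq_subr // subn_gt0.
  have : (p %| (#|F| - 1) ^ t)%N by rewrite -(dvdn_subr le pF) //.
  rewrite Euclid_dvdX // sz andbT => pQ1.
  have pQ : (p %| #|F|)%N by rewrite cF -expnM; apply: dvdn_exp (dvdnn p); rewrite muln_gt0 e0 m0.
  have := dvdn_sub pQ pQ1; rewrite subKn // dvdn1 => /eqP p1.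
  by rewrite p1 in pp.
have k1 : (k'.+2 <= sumn (map size Ls) + ceildiv k'.+2 d'.+2)%N.
  have h1 := card_nzmod k' d'.
  have h2 := @card_zmod k'.+1 d'.+2 isT.
  have h3 := cardC [pred l : 'I_k'.+2 | (l %% d'.+2 == 0)%N].
  rewrite card_ord in h3.
  have e1 : #|[set l : 'I_k'.+2 | (l %% d'.+2 != 0)%N]| = #|[predC [pred l : 'I_k'.+2 | (l %% d'.+2 == 0)%N]]|.
    by apply: eq_card => l; rewrite !inE.
  have e2 : #|[set l : 'I_k'.+2 | (l %% d'.+2 == 0)%N]| = #|[pred l : 'I_k'.+2 | (l %% d'.+2 == 0)%N]|.
    by apply: eq_card => l; rewrite !inE.
  rewrite -/Ls e1 in h1; rewrite e2 in h2. by rewrite -{1}h3 addnC leq_add.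
have s0 : (0 < sumn (map size Ls))%N.
  have := @ceil_lt k'.+2 d'.+2 isT isT; lia.

have cF' : #|F| = (p ^ (e * m))%N by rewrite cF expnM.
rewrite cF' in NF CB pD.
apply: (final_arith pp (n0_dvd pp cF) (ltnW (n0_gt1 F e pp)) NF CB pD s0 _ k1).
by rewrite muln_gt0 e0 m0.
Qed.

Lemma fblk_neq0 (F : finFieldType) k' d' : fblk F k' d' != 0.
Proof.
pose x : 'I_k'.+2 -> F := fun i => if (i < d'.+2)%N then 1 else 0.
apply/negP => /eqP H.
have : (fblk F k' d').@[x] = 1.
  have A0 : (ord0 : 'I_k'.+2) \in Ablk k' d' by rewrite inE mod0n.
  rewrite evalf (bigD1 ord0) //= big1 ?addr0.
    have P1 : \prod_(l <- enum (Sblk d' ord0)) x l = 1.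
      apply: big1_seq => l /andP[_]; rewrite mem_enum inE => /andP[/eqP l0 _].
      rewrite div0n in l0; have : (l %/ d'.+2 < 1)%N by rewrite l0.
      by rewrite ltn_divLR // mul1n /x => ->.
    have c1 : x (cblk ord0) = 1 by rewrite /x /cblk inordK.
    by rewrite evalR P1 c1 expr1n !mul1r /x.
  move=> a /andP[aA a0]; rewrite /x; case: ifP => [ad|]; last by rewrite mul0r.
  move: aA; rewrite inE => /andP[am _].
  by move: a0; rewrite -(inj_eq val_inj) /= -(modn_small ad) (eqP am).
by rewrite H meval0 => /eqP; rewrite eq_sym oner_eq0.
Qed.


Lemma lin_case (F : finFieldType) p e m k' : prime p -> (0 < e)%N -> (0 < m)%N ->
  #|F| = ((p ^ e) ^ m)%N ->
  (logn p (@Nfy F k'.+1 (p ^ e) ('X_ord0)) <= e * m * ceildiv k'.+1 1)%N.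
Proof.
move=> pp e0 m0 cF.
rewrite Nfy_sum.
pose phi := fun x : {ffun 'I_k'.+1 -> F} => x ord0.
have hR : forall (a a' : 'I_k'.+1), a \in [set ord0] -> a' \in [set ord0] ->
   forall x c, (fun (_ : 'I_k'.+1) (_ : {ffun 'I_k'.+1 -> F}) => (1 : F)) a (setv x a' c) =
               (fun _ _ => 1) a x by [].
have hphi : forall a, a \in [set ord0] -> forall x c, phi (setv x a c) = phi x + (c - x a) * 1.
  by move=> a; rewrite inE => /eqP -> x c; rewrite /phi setv_at mulr1 addrC subrK.
have h0 : forall x, [forall a in [set (ord0 : 'I_k'.+1)], (1 : F) == 0] -> phi x = 0.
  by move=> x /forall_inP /(_ ord0); rewrite inE eqxx oner_eq0 => /(_ isT).
have NF := N_formula (psi p e) hR hphi h0.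
have C0 : #|[set x : {ffun 'I_k'.+1 -> F} | [forall a in [set (ord0 : 'I_k'.+1)], (1 : F) == 0]]| = 0%N.
  apply/eqP; rewrite cards_eq0; apply/eqP/setP => x; rewrite !inE.
  by apply/negbTE/forall_inP => /(_ ord0); rewrite inE eqxx oner_eq0 => /(_ isT).
rewrite C0 muln0 !addn0 in NF.
have -> : (\sum_(x : {ffun 'I_k'.+1 -> F}) nfib (fun y : F => (y ^+ (p ^ e) - y)%R) ((('X_ord0 : {mpoly F[k'.+1]}).@[fun i => x i])%R))%N
        = (\sum_x nfib (psi p e) (phi x))%N.
  by apply: eq_bigr => x _; rewrite mevalXU.
rewrite NF cF -expnM lognX pfactorK // /ceildiv addnK divn1 mulnC. by rewrite mulnA.
Qed.

Section OneVar.
Context (F : finFieldType) (p e m d : nat).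
Hypothesis pp : prime p.
Hypothesis e0 : (0 < e)%N.
Hypothesis m0 : (0 < m)%N.
Hypothesis cF : #|F| = ((p ^ e) ^ m)%N.
Hypothesis d0 : (0 < d)%N.

Let n := nfib (psi (F := F) p e).
Definition Nc (c : F) := (\sum_(z : F) n (c * z ^+ d)%R)%N.

Lemma Nfy_Nc c : @Nfy F 1 (p ^ e) (c *: 'X_ord0 ^+ d) = Nc c.
Proof.
rewrite Nfy_sum /Nc.
rewrite (reindex (fun z : F => [ffun _ : 'I_1 => z])) /=; last first.
  exists (fun x : {ffun 'I_1 -> F} => x ord0); first by move=> z _; rewrite ffunE.
  move=> x _.
  by apply/ffunP => i; rewrite ffunE (ord1 i).
apply: eq_bigr => z _.
by rewrite mevalZ rmorphXn /= mevalXU ffunE.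
Qed.

Lemma cardnz : #|(fun i : F => i != 0)| = (#|F| - 1)%N.
Proof. by rewrite subn1 -(cardC1 (0 : F)); apply: eq_card. Qed.

Lemma sum_n : (\sum_(t : F) n t = #|F|)%N.
Proof. exact: sumfib. Qed.

Lemma sum_Nc : (\sum_(c : F | c != 0%R) Nc c = (#|F| - 1) * #|F|)%N.
Proof.
rewrite /Nc exchange_big /= (bigD1 0) //=.
have -> : (\sum_(c : F | c != 0%R) n (c * 0 ^+ d)%R = (#|F| - 1) * n 0%R)%N.
  rewrite (eq_bigr (fun _ => n 0%R)); last by move=> c _; rewrite expr0n -(prednK d0) mulr0.
  by rewrite sum_nat_const cardnz.
have -> : (\sum_(z : F | z != 0%R) \sum_(c : F | c != 0%R) n (c * z ^+ d)%R = \sum_(z : F | z != 0%R) (#|F| - n 0%R%R))%N.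
  apply: eq_bigr => z z0.
  have w0 : z ^+ d != 0 by rewrite expf_neq0.
  have : (\sum_c n (c * z ^+ d)%R = #|F|)%N.
    by rewrite -sum_n [RHS](reindex_inj (mulIf w0)).
  by rewrite (bigD1 0) //= mul0r => <-; rewrite addKn.
rewrite sum_nat_const cardnz -mulnDr subnKC //.
rewrite -sum_n (bigD1 0) //=; exact: leq_addr.
Qed.

Lemma Nc_ge c : (0 < Nc c)%N.
Proof.
rewrite /Nc (bigD1 0) //= expr0n -(prednK d0) mulr0 ltn_addr //.
by apply: leq_trans (ltnW (n0_gt1 F e pp)); rewrite /n /nfib.
Qed.

Lemma one_case : exists c : F, c != 0 /\
  (logn p (@Nfy F 1 (p ^ e) (c *: 'X_ord0 ^+ d)) <= e * m * ceildiv 1 d)%N.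
Proof.
have Q2 : (1 < #|F|)%N by apply: finNzRing_gt1.
case: (pickP (fun c => (c != 0) && (Nc c <= #|F|)%N)) => [c /andP[c0 Hc]|H].
  exists c; split => //.
  rewrite Nfy_Nc /ceildiv addKn divnn d0 muln1.
  have := pfactor_dvdnn p (Nc c) => /(dvdn_leq (Nc_ge c)) le.
  have := leq_trans le Hc; rewrite cF -expnM leq_exp2l //; exact: prime_gt1.
exfalso.
have : (\sum_(c : F | c != 0%R) #|F|.+1 <= \sum_(c : F | c != 0%R) Nc c)%N.
  by apply: leq_sum => c c0; move: (H c); rewrite c0 /= ltnNge => ->.
rewrite sum_Nc sum_nat_const cardnz.
nia.
Qed.
End OneVar.


Lemma neq0_of_eval (F : finFieldType) n (f : {mpoly F[n]}) v : f.@[v] != 0 -> f != 0.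
Proof. by apply: contraNneq => ->; rewrite meval0. Qed.

Theorem proposition5p2 (p e m k d : nat) (F : finFieldType) :
  prime p -> (0 < e)%N -> (0 < m)%N -> (0 < k)%N ->
  #|F| = ((p ^ e) ^ m)%N ->
  (0 < d)%N -> (d <= k * ((p ^ e) ^ m - 1))%N ->
  exists f : {mpoly F[k]},
    [/\ f != 0, f \is d.-homog &
        (logn p (@Nfy F k (p ^ e)%N f) <= e * m * ceildiv k d)%N].
Proof.
move=> pp e0 m0 k0 cF d0 _.
case: k k0 => [//|k'] _.
case: d d0 => [//|[|d'']] _.
  exists 'X_ord0; split.
  - by apply: (@neq0_of_eval _ _ _ (fun _ => 1)); rewrite mevalXU oner_eq0.
  - by rewrite dhomogX /= mdeg1.
  - exact: lin_case.
case: k' => [|k''].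
  have [c [c0 H]] := @one_case F p e m d''.+2 pp e0 m0 cF isT.
  exists (c *: 'X_ord0 ^+ d''.+2); split => //.
  - apply: (@neq0_of_eval _ _ _ (fun _ => 1)).
    by rewrite mevalZ rmorphXn /= mevalXU expr1n mulr1.
  - apply: dhomogZ.
    have h : ('X_ord0 : {mpoly F[1]}) \is 1.-homog by rewrite dhomogX /= mdeg1.
    by move: (dhomogMn d''.+2 h); rewrite mul1n.
exists (fblk F k'' d''); split.
- exact: fblk_neq0.
- exact: fblk_homog.
- exact: block_case.
Qed.
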